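(* Let $L, M\ge1$ be integers. Let $\sigma$ be $L$-periodic, $\theta$ an affine permutation of period $L$, $\sigma'$ be $ML$-periodic and $\theta'$ an affine permutation of period $ML$. Let $\mu,\mu'$ be Maya diagrams and $\nu=(\nu_+,\nu_-)$ a pair of Young diagrams, and suppose $$\sigma\circ\theta=\sigma'\circ\theta',\qquad \mu\circ\theta=\mu'\circ\theta'.$$ Then, as formal series, $$F^{(ML)}_{(\sigma',\theta';\mu',\nu)}(u'_0,\dots,u'_{ML-1})\Big|_{u'_{i+kL}=u_i\ (0\le i\le L-1,\ 0\le k\le M-1)}=F^{(L)}_{(\sigma,\theta;\mu,\nu)}(u_0,\dots,u_{L-1}).$$ Equivalently, the non-commutative topological vertex $\mathcal{C}_{(\sigma,\theta;\mu,\nu)}$ is obtained from $\mathcal{C}_{(\sigma',\theta';\mu',\nu)}$ by imposing $q^{\theta}_i=q'^{\theta'}_i=q'^{\theta'}_{i+L}=\cdots=q'^{\theta'}_{i+(M-1)L}$ for $i=0,\dots,L-1$.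
   Context: $\mathbb{Z}_h=\mathbb{Z}+\tfrac12$. For $K\ge1$, an affine permutation of period $K$ is a bijection $\theta:\mathbb{Z}_h\to\mathbb{Z}_h$ with $\theta(h+K)=\theta(h)+K$ and $\sum_{i=1}^K\theta(i-\frac12)=\sum_{i=1}^K(i-\frac12)$; a map $f:\mathbb{Z}_h\to\{\pm1\}$ is $K$-periodic if $f(h+K)=f(h)$. A Maya diagram is a map $\lambda:\mathbb{Z}_h\to\{\pm1\}$ equal to $-1$ for $h\ll0$ and $+1$ for $h\gg0$. A Young diagram $\lambda=(\lambda_1\ge\lambda_2\ge\cdots)$ is identified with its box set $\{(x,y)\in\mathbb{Z}_{\ge0}^2: x<\lambda_{y+1}\}$; $|\lambda|$ is its number of boxes. For Young diagrams write $\lambda\overset{+}{\succ}\lambda'$ if $\lambda_1\ge\lambda'_1\ge\lambda_2\ge\lambda'_2\ge\cdots$ and $\lambda\overset{-}{\succ}\lambda'$ if the same interlacing holds for the transposes (column lengths). Fix $K\ge1$, a $K$-periodic $\sigma$, an affine permutation $\theta$ of period $K$, a Maya diagram $\mu$ and Young diagrams $\nu=(\nu_+,\nu_-)$. A transition of type $(\sigma,\theta;\mu,\nu)$ is a map $\mathcal{V}$ from $\mathbb{Z}$ to Young diagrams such that $\mathcal{V}(n)=\nu_-$ for $n\ll0$, $\mathcal{V}(n)=\nu_+$ for $n\gg0$, and for every $h\in\mathbb{Z}_h$, writing $\epsilon=\mu(\theta(h))\in\{\pm1\}$ and $s=\sigma(\theta(h))$, one has $\mathcal{V}(h-\epsilon/2)\overset{s}{\succ}\mathcal{V}(h+\epsilon/2)$.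 (It is a known fact, assumed here, that when transitions exist there is a unique minimal transition $\mathcal{V}_{\min}$ with $\mathcal{V}_{\min}(n)\subseteq\mathcal{V}(n)$ for all $n$ and all transitions $\mathcal{V}$.) For a transition $\mathcal{V}$ and $0\le i\le K-1$ set $w_i(\mathcal{V})=\sum_{n\equiv i\ (\mathrm{mod}\ K)}\big(|\mathcal{V}(n)|-|\mathcal{V}_{\min}(n)|\big)$ (a finite sum), and define the formal series in variables $u_0,\dots,u_{K-1}$ $$F^{(K)}_{(\sigma,\theta;\mu,\nu)}(u_0,\dots,u_{K-1})=\sum_{\mathcal{V}}\prod_{i=0}^{K-1}u_i^{w_i(\mathcal{V})},$$ the sum over all transitions of type $(\sigma,\theta;\mu,\nu)$. (Geometrically this is the crystal-melting sum over finite subsets of the ground-state crystal $\{(n,x,y): (x,y)\notin\mathcal{V}_{\min}(n)\}$ obeying the melting rule, with atoms on slice $n$ colored $n \bmod K$.) The non-commutative topological vertex is $\mathcal{C}_{(\sigma,\theta;\mu,\nu)}(q_0,\dots,q_{K-1})=F^{(K)}_{(\sigma,\theta;\mu,\nu)}(q^\theta_0,\dots,q^\theta_{K-1})$, where, with $q_{j+K}=q_j$, $q^\theta_i=q_{a+1/2}q_{a+3/2}\cdots q_{b-1/2}$ if $a<b$ and $q^\theta_i=q_{a-1/2}^{-1}q_{a-3/2}^{-1}\cdots q_{b+1/2}^{-1}$ if $a>b$, for $a=\theta^{-1}(i-\frac12)$, $b=\theta^{-1}(i+\frac12)$. *)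

(* Defs.v *)
From HB Require Import structures.
From mathcomp Require Import all_boot all_order all_algebra.
From Stdlib Require Import ClassicalEpsilon.
Set Implicit Arguments. Unset Strict Implicit. Unset Printing Implicit Defensive.
Import Order.TTheory GRing.Theory Num.Theory.
Local Open Scope ring_scope.

(* CONVENTIONS.
   - A half-integer h = j + 1/2 in Z_h is encoded by the integer j : int.
     Thus h - 1/2 = j and h + 1/2 = j + 1.
   - A sign in {+1,-1} is encoded by a bool: true = +1, false = -1.
   - A Young diagram is a weakly decreasing list of positive parts
     (lambda_1 >= lambda_2 >= ... > 0). *)

Definition young (s : seq nat) : bool := sorted geq s && all (fun x => 0 < x)%N s.
(* part s k = lambda_{k+1} (0 beyond the length) *)
Definition part (s : seq nat) (k : nat) : nat := nth 0%N s k.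
(* conj_part s j = (transpose of lambda)_{j+1} = #{k | lambda_k > j} *)
Definition conj_part (s : seq nat) (j : nat) : nat := count (fun x => j < x)%N s.
Definition nboxes (s : seq nat) : nat := sumn s.

Definition interlace (p q : nat -> nat) : Prop :=
  forall k : nat, (q k <= p k)%N /\ (p k.+1 <= q k)%N.

(* l >^{s} l' : for s = +1 interlacing of rows, for s = -1 of columns *)
Definition succ_rel (s : bool) (l l' : seq nat) : Prop :=
  if s then interlace (part l) (part l') else interlace (conj_part l) (conj_part l').

Definition subdiagram (l l' : seq nat) : Prop :=
  forall k : nat, (part l k <= part l' k)%N.

Definition periodic (K : nat) (f : int -> bool) : Prop :=
  forall j : int, f (j + K%:Z) = f j.

(* affine permutation of period K, in shifted coordinates:
   theta_h (j + 1/2) = th j + 1/2; the sum condition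
   sum_{i=1}^K theta_h(i - 1/2) = sum_{i=1}^K (i - 1/2) becomes
   sum_{i=0}^{K-1} th i = sum_{i=0}^{K-1} i. *)
Definition affine_perm (K : nat) (th : int -> int) : Prop :=
  bijective th /\ (forall j : int, th (j + K%:Z) = th j + K%:Z) /\
  \sum_(0 <= i < K) th i%:Z = \sum_(0 <= i < K) (i%:Z).

Definition maya (mu : int -> bool) : Prop :=
  exists N : nat, forall j : int,
    (j <= - N%:Z -> mu j = false) /\ (N%:Z <= j -> mu j = true).

Definition is_transition (sg : int -> bool) (th : int -> int) (mu : int -> bool)
    (nup num : seq nat) (V : int -> seq nat) : Prop :=
  (forall n : int, young (V n)) /\
  (exists N : nat, forall n : int,
      (n <= - N%:Z -> V n = num) /\ (N%:Z <= n -> V n = nup)) /\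
  (forall j : int,
      if mu (th j) then succ_rel (sg (th j)) (V j) (V (j + 1))
      else succ_rel (sg (th j)) (V (j + 1)) (V j)).

Definition is_min_transition (sg : int -> bool) (th : int -> int) (mu : int -> bool)
    (nup num : seq nat) (V0 : int -> seq nat) : Prop :=
  is_transition sg th mu nup num V0 /\
  forall V, is_transition sg th mu nup num V -> forall n : int, subdiagram (V0 n) (V n).

(* The minimal transition V_min (chosen by Hilbert epsilon; it is the unique
   minimal transition whenever transitions exist). *)
Definition Vmin (sg : int -> bool) (th : int -> int) (mu : int -> bool)
    (nup num : seq nat) : int -> seq nat :=
  epsilon (inhabits (fun _ : int => [::] : seq nat)) (is_min_transition sg th mu nup num).

(* weight_is K V0 V i c : c = sum_{n = i mod K} (|V n| - |V0 n|),
   the sum being over a window outside of which V and V0 agree. *)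
Definition weight_is (K : nat) (V0 V : int -> seq nat) (i : nat) (c : int) : Prop :=
  exists N : nat,
    (forall n : int, (N <= absz n)%N -> V n = V0 n) /\
    c = \sum_(0 <= k < (2 * N).+1)
          (let n := k%:Z - N%:Z in
           if ((n %% K%:Z)%Z == i%:Z) then (nboxes (V n))%:Z - (nboxes (V0 n))%:Z
           else 0).

(* V contributes to the coefficient of u_0^{w 0} ... u_{K-1}^{w (K-1)}
   in F^{(K)}_{(sg,th;mu,(nup,num))}. *)
Definition F_coef (K : nat) (sg : int -> bool) (th : int -> int) (mu : int -> bool)
    (nup num : seq nat) (w : nat -> int) (V : int -> seq nat) : Prop :=
  is_transition sg th mu nup num V /\
  forall i : nat, (i < K)%N -> weight_is K (Vmin sg th mu nup num) V i (w i).

(* V contributes to the coefficient of u_0^{w 0} ... u_{L-1}^{w (L-1)} in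
   F^{(ML)}_{(sg,th;mu,(nup,num))} after the substitution u'_{i+kL} = u_i. *)
Definition F_coef_collapsed (L M : nat) (sg : int -> bool) (th : int -> int)
    (mu : int -> bool) (nup num : seq nat) (w : nat -> int) (V : int -> seq nat) : Prop :=
  is_transition sg th mu nup num V /\
  exists w' : nat -> int,
    (forall j : nat, (j < M * L)%N -> weight_is (M * L) (Vmin sg th mu nup num) V j (w' j)) /\
    (forall i : nat, (i < L)%N -> w i = \sum_(k < M) w' (i + k * L)%N).

(* Main.v *)
Require Import Defs.
From HB Require Import structures.
From mathcomp Require Import all_boot all_order all_algebra.
From Stdlib Require Import ClassicalEpsilon FunctionalExtensionality PropExtensionality ProofIrrelevance.
Import Order.TTheory GRing.Theory Num.Theory.
Local Open Scope ring_scope.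

Definition win (N : nat) (g : int -> int) : int :=
  \sum_(0 <= k < (2 * N).+1) g (k%:Z - N%:Z).

Definition gw (K : nat) (V0 V : int -> seq nat) (i : nat) : int -> int :=
  fun n => if ((n %% K%:Z)%Z == i%:Z) then (nboxes (V n))%:Z - (nboxes (V0 n))%:Z else 0.

Lemma weightE K V0 V i c : weight_is K V0 V i c <->
  exists N : nat, (forall n : int, (N <= absz n)%N -> V n = V0 n) /\ c = win N (gw K V0 V i).
Proof. by []. Qed.

Lemma gw_sup K V0 V i N : (forall n : int, (N <= absz n)%N -> V n = V0 n) ->
  forall n : int, (N <= absz n)%N -> gw K V0 V i n = 0.
Proof. by move=> H n hn; rewrite /gw H // subrr; case: ifP. Qed.

Lemma win_S N g : (forall n : int, (N.+1 <= absz n)%N -> g n = 0) -> win N.+1 g = win N g.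
Proof.
move=> H; rewrite /win.
have -> : (2 * N.+1).+1 = ((2 * N).+1).+1.+1 by rewrite mulnS.
rewrite big_nat_recl // big_nat_recr //= H; last by rewrite sub0r abszN.
rewrite H; last first.
  have e : ((2 * N).+2 = N.+1 + N.+1)%N by rewrite mul2n -addnn addnS addSn.
  by rewrite e PoszD addrK.
rewrite add0r addr0; apply: eq_bigr => k _.
by rewrite -(addn1 k) -(addn1 N) !PoszD opprD addrACA subrr addr0.
Qed.

Lemma win_stable N N' g : (forall n : int, (N <= absz n)%N -> g n = 0) ->
  (N <= N')%N -> win N g = win N' g.
Proof.
move=> H /subnKC <-; elim: (N' - N)%N => [|a IH]; first by rewrite addn0.
rewrite addnS win_S // => n hn; apply: H; apply: leq_trans hn.
by rewrite -addnS leq_addr.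
Qed.

Lemma win_sup N1 N2 g : (forall n : int, (N1 <= absz n)%N -> g n = 0) ->
  (forall n : int, (N2 <= absz n)%N -> g n = 0) -> win N1 g = win N2 g.
Proof.
move=> H1 H2; case: (leqP N1 N2) => h; first exact: win_stable.
by symmetry; apply: win_stable => //; apply: ltnW.
Qed.

Lemma sum_pick (M q : nat) (x : int) :
  \sum_(0 <= k < M) (if k == q then x else 0) = if (q < M)%N then x else 0.
Proof.
elim: M => [|M IH]; first by rewrite big_geq.
rewrite big_nat_recr //= IH ltnS.
case: (ltngtP q M) => h.
- by rewrite addr0.
- by rewrite addr0.
- by rewrite add0r.
Qed.

Lemma split_pt (L M i : nat) (n : int) (x : int) : (0 < L)%N -> (0 < M)%N -> (i < L)%N ->
  (if (n %% L%:Z)%Z == i%:Z then x else 0) =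
  \sum_(0 <= k < M) (if (n %% (M * L)%N%:Z)%Z == (i + k * L)%N%:Z then x else 0).
Proof.
move=> hL hM hi.
have hML : (0 < M * L)%N by rewrite muln_gt0 hL hM.
set r := absz (n %% (M * L)%N%:Z)%Z.
have hr : (n %% (M * L)%N%:Z)%Z = r%:Z.
  by rewrite /r gez0_abs // modz_ge0 // eqz_nat -lt0n.
have rlt : (r < M * L)%N.
  by rewrite -ltz_nat -hr ltz_pmod // ltz_nat.
have hmod : (n %% L%:Z)%Z = (r %% L)%N%:Z.
  rewrite -modz_nat -hr [in LHS](divz_eq n (M * L)%N%:Z) PoszM mulrA.
  by rewrite modzMDl.
rewrite hmod hr eqz_nat.
under eq_bigr => k _ do rewrite eqz_nat.
have E : forall k, (r == i + k * L)%N = (k == r %/ L)%N && (r %% L == i)%N.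
  move=> k; apply/eqP/andP => [->|[/eqP hk /eqP hi']].
    by rewrite addnC divnMDl // divn_small // addn0 modnMDl modn_small.
  by rewrite (divn_eq r L) hk hi' addnC.
under eq_bigr => k _ do rewrite E.
case: (modn r L == i).
- transitivity (if (r %/ L < M)%N then x else 0).
    by rewrite ltn_divLR // rlt.
  by rewrite -sum_pick; apply: eq_bigr => k _; rewrite andbT.
- by rewrite big1 // => k _; rewrite andbF.
Qed.

Lemma split_win (L M i N : nat) g : (0 < L)%N -> (0 < M)%N -> (i < L)%N ->
  win N (fun n => if (n %% L%:Z)%Z == i%:Z then g n else 0) =
  \sum_(k < M) win N (fun n => if (n %% (M * L)%N%:Z)%Z == (i + k * L)%N%:Z then g n else 0).
Proof.
move=> hL hM hi.
rewrite -(big_mkord (fun _ => true) (fun k : nat => win N (fun n => if (n %% (M * L)%N%:Z)%Z == (i + k * L)%N%:Z then g n else 0))) /win.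
rewrite exchange_big_nat; apply: eq_bigr => k _; exact: split_pt.
Qed.

Theorem mainTheorem2 (L M : nat) (hL : (0 < L)%N) (hM : (0 < M)%N)
  (sg : int -> bool) (th : int -> int) (sg' : int -> bool) (th' : int -> int)
  (mu mu' : int -> bool) (nup num : seq nat)
  (hsg : periodic L sg) (hth : affine_perm L th)
  (hsg' : periodic (M * L) sg') (hth' : affine_perm (M * L) th')
  (hmu : maya mu) (hmu' : maya mu')
  (hnup : young nup) (hnum : young num)
  (hsgth : forall j : int, sg (th j) = sg' (th' j))
  (hmuth : forall j : int, mu (th j) = mu' (th' j)) :
  forall w : nat -> int,
    exists f : {V : int -> seq nat | F_coef_collapsed L M sg' th' mu' nup num w V} ->
               {V : int -> seq nat | F_coef L sg th mu nup num w V},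
      bijective f.
Proof.
move=> w.
have Htr : forall V, is_transition sg th mu nup num V <-> is_transition sg' th' mu' nup num V.
  move=> V; rewrite /is_transition; split=> -[h1 [h2 h3]]; split=> //; split=> // j.
    by move: (h3 j); rewrite hsgth hmuth.
  by move: (h3 j); rewrite -hsgth -hmuth.
have Hmin : Vmin sg' th' mu' nup num = Vmin sg th mu nup num.
  rewrite /Vmin; f_equal; apply: functional_extensionality => V0.
  apply: propositional_extensionality; rewrite /is_min_transition.
  split=> -[h1 h2]; split.
  - by apply/Htr.
  - by move=> V /Htr; apply: h2.
  - by apply/Htr.
  - by move=> V /Htr; apply: h2.
set V0 := Vmin sg th mu nup num.
have hML : (0 < M * L)%N by rewrite muln_gt0 hL hM.
have ltj : forall i k : nat, (i < L)%N -> (k < M)%N -> (i + k * L < M * L)%N.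
  move=> i k hi hk; apply: (@leq_trans (k.+1 * L)).
    by rewrite mulSn ltn_add2r.
  by rewrite leq_mul2r hk orbT.
have Hiff : forall V, F_coef_collapsed L M sg' th' mu' nup num w V -> F_coef L sg th mu nup num w V.
  move=> V [ht [w' [Hw' Hws]]]; split; first by apply/Htr.
  rewrite Hmin -/V0 in Hw'.
  have [N [HN _]] := (proj1 (weightE _ _ _ _ _) (Hw' 0%N hML)).
  move=> i hi; apply/weightE; exists N; split; first exact: HN.
  have E := split_win L M i N (fun n => (nboxes (V n))%:Z - (nboxes (V0 n))%:Z) hL hM hi.
  rewrite (Hws i hi); symmetry; apply: etrans; first exact: E.
  apply: eq_bigr => k _.
  have [Nj [HNj ->]] := (proj1 (weightE _ _ _ _ _) (Hw' _ (ltj i k hi (ltn_ord k)))).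
  by apply: win_sup; apply: gw_sup.
have Hiff2 : forall V, F_coef L sg th mu nup num w V -> F_coef_collapsed L M sg' th' mu' nup num w V.
  move=> V [ht Hw]; split; first by apply/Htr.
  rewrite Hmin -/V0.
  have [N [HN _]] := (proj1 (weightE _ _ _ _ _) (Hw 0%N hL)).
  exists (fun j => win N (gw (M * L) V0 V j)); split.
    by move=> j hj; apply/weightE; exists N.
  move=> i hi.
  have [Ni [HNi ->]] := (proj1 (weightE _ _ _ _ _) (Hw _ hi)).
  rewrite (@win_sup Ni N); try by apply: gw_sup.
  have E := split_win L M i N (fun n => (nboxes (V n))%:Z - (nboxes (V0 n))%:Z) hL hM hi.
  cbv beta in E; exact: E.
exists (fun x => exist _ (sval x) (Hiff _ (svalP x))).
exists (fun y => exist _ (sval y) (Hiff2 _ (svalP y))).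
- by move=> [V p] /=; f_equal; apply: proof_irrelevance.
- by move=> [V p] /=; f_equal; apply: proof_irrelevance.
Qed.
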